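(* Let $G$ be a finite, simple, connected graph and let $v$ be a cut vertex of $G$. Then every resolving set for $G$ is disjoint from the vertex set of at most one connected component of $G\setminus\{v\}$. Moreover, if $W$ is a resolving set for $G$ that intersects the vertex sets of at least two distinct components of $G\setminus\{v\}$, then $W\setminus\{v\}$ is also a resolving set for $G$.
   Context: For vertices $x,y$ of a connected graph $G$, $d(x,y)$ denotes the length of a shortest $x$–$y$ path. A set $W\subseteq V(G)$ is a resolving set for $G$ if for every two distinct vertices $u,v\in V(G)$ there exists $w\in W$ with $d(u,w)\neq d(v,w)$. A vertex $v$ is a cut vertex of $G$ if the induced subgraph $G\setminus\{v\}$ on $V(G)\setminus\{v\}$ has at least two connected components. *)

(* Defs.v *)
(* A finite simple graph is a symmetric irreflexive
   relation e on a finType T. *)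
From mathcomp Require Import all_boot.
Set Implicit Arguments. Unset Strict Implicit. Unset Printing Implicit Defensive.

Section Graphs.
Variable T : finType.
Variable e : rel T.

Definition connected_graph : Prop := forall x y : T, connect e x y.

Fixpoint nball (n : nat) (x : T) : {set T} :=
  match n with
  | 0 => [set x]
  | n'.+1 => nball n' x :|: [set y | [exists z in nball n' x, e z y]]
  end.

(* d(x,y) = least n with y in nball n x, i.e. length of a shortest x-y path.
   (Searched in 0..#|T|-1, which suffices for connected graphs; value #|T|
    if y is unreachable.) *)
Definition dist (x y : T) : nat :=
  find (fun n => y \in nball n x) (iota 0 #|T|).

Definition resolving (W : {set T}) : Prop :=
  forall u w : T, u != w -> exists2 z, z \in W & dist u z != dist w z.

Definition del_rel (v : T) : rel T :=
  [rel x y | [&& x != v, y != v & e x y]].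

Definition comp_of (v x : T) : {set T} :=
  [set y | (y != v) && connect (del_rel v) x y].

Definition components_del (v : T) : {set {set T}} :=
  [set comp_of v x | x in [set~ v]].

Definition cut_vertex (v : T) : Prop :=
  1 < #|components_del v|.
End Graphs.

(* Main.v *)
Require Import Defs.
From mathcomp Require Import all_boot.
Set Implicit Arguments. Unset Strict Implicit. Unset Printing Implicit Defensive.

Lemma nballS (T : finType) (e : rel T) n x y :
  (y \in nball e n.+1 x) = (y \in nball e n x) || [exists z in nball e n x, e z y].
Proof. by rewrite /= in_setU inE. Qed.

Lemma nball_S (T : finType) (e : rel T) n x y :
  y \in nball e n x -> y \in nball e n.+1 x.
Proof. by move=> H; rewrite nballS H. Qed.

Lemma nball_le (T : finType) (e : rel T) m n x y :
  m <= n -> y \in nball e m x -> y \in nball e n x.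
Proof.
elim: n => [|n IH]; first by rewrite leqn0 => /eqP ->.
rewrite leq_eqVlt => /orP [/eqP -> //| Hm] Hy.
by apply: nball_S; apply: IH.
Qed.

Lemma nball_trans (T : finType) (e : rel T) m n x y z :
  y \in nball e m x -> z \in nball e n y -> z \in nball e (m + n) x.
Proof.
move=> Hy; elim: n z => [|n IH] z.
  by rewrite /= in_set1 => /eqP ->; rewrite addn0.
rewrite addnS !nballS => /orP [/IH -> //| /existsP [z' /andP [Hz' Hez]]].
apply/orP; right; apply/existsP; exists z'; by rewrite (IH _ Hz') Hez.
Qed.

Lemma nball_edge (T : finType) (e : rel T) x y : e x y -> y \in nball e 1 x.
Proof.
move=> H; rewrite nballS; apply/orP; right; apply/existsP; exists x.
by rewrite /= in_set1 eqxx H.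
Qed.

Lemma nball_sym (T : finType) (e : rel T) (e_sym : symmetric e) n x y :
  y \in nball e n x -> x \in nball e n y.
Proof.
elim: n y => [|n IH] y; first by rewrite /= !in_set1 eq_sym.
rewrite nballS => /orP [/IH H| /existsP [z /andP [Hz Hez]]].
  exact: (nball_S H).
have H1 : z \in nball e 1 y by apply: nball_edge; rewrite e_sym.
exact: (nball_trans H1 (IH _ Hz)).
Qed.

Lemma path_nball (T : finType) (e : rel T) x p :
  path e x p -> last x p \in nball e (size p) x.
Proof.
elim: p x => [|h p IH] x /=; first by rewrite in_set1.
move=> /andP [Hxh Hp].
exact: (nball_trans (nball_edge Hxh) (IH _ Hp)).
Qed.

Lemma exists_ball (T : finType) (e : rel T) (conn : connected_graph e) x y :
  exists n, n < #|T| /\ y \in nball e n x.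
Proof.
have /connectP [p Hp ->] := conn x y.
case/shortenP: Hp => p' Hp' Uq _.
exists (size p'); split; last exact: path_nball.
have := max_card [pred z in x :: p']; rewrite (card_uniqP Uq) /=; by [].
Qed.

Lemma has_ball (T : finType) (e : rel T) (conn : connected_graph e) x y :
  has (fun n => y \in nball e n x) (iota 0 #|T|).
Proof.
have [n [Hn Hy]] := exists_ball conn x y.
by apply/hasP; exists n => //; rewrite mem_iota.
Qed.

Lemma dist_lt (T : finType) (e : rel T) (conn : connected_graph e) x y :
  dist e x y < #|T|.
Proof.
by have := has_ball conn x y; rewrite has_find size_iota.
Qed.

Lemma dist_ball (T : finType) (e : rel T) (conn : connected_graph e) x y :
  y \in nball e (dist e x y) x.
Proof.
have := nth_find 0 (has_ball conn x y).
by rewrite nth_iota ?add0n //; exact: dist_lt.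
Qed.

Lemma dist_min (T : finType) (e : rel T) (conn : connected_graph e) n x y :
  y \in nball e n x -> dist e x y <= n.
Proof.
move=> Hy; rewrite leqNgt; apply/negP => Hlt.
have := before_find 0 Hlt.
rewrite nth_iota ?add0n; first by rewrite Hy.
exact: ltn_trans Hlt (dist_lt conn x y).
Qed.

Lemma dist_sym (T : finType) (e : rel T) (e_sym : symmetric e)
  (conn : connected_graph e) x y : dist e x y = dist e y x.
Proof.
apply/eqP; rewrite eqn_leq; apply/andP; split; apply: dist_min => //;
  apply: nball_sym => //; exact: dist_ball.
Qed.

Lemma dist_tri (T : finType) (e : rel T) (conn : connected_graph e) x y z :
  dist e x z <= dist e x y + dist e y z.
Proof.
apply: dist_min => //; apply: nball_trans; exact: dist_ball.
Qed.

Lemma dist_edge (T : finType) (e : rel T) (e_irr : irreflexive e)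
  (conn : connected_graph e) x y : e x y -> dist e x y = 1.
Proof.
move=> H; apply/eqP; rewrite eqn_leq (dist_min conn (nball_edge H)) /=.
rewrite lt0n; apply/negP => /eqP H0.
have := dist_ball conn x y; rewrite H0 /= in_set1 => /eqP Eq.
by move: H; rewrite Eq e_irr.
Qed.

Lemma comp_step (T : finType) (e : rel T) v x0 y z :
  y \in comp_of e v x0 -> z != v -> e y z -> z \in comp_of e v x0.
Proof.
rewrite !inE => /andP [Hyv Hc] Hzv Hyz.
rewrite Hzv /=; apply: connect_trans Hc (connect1 _).
by rewrite /del_rel /= Hyv Hzv Hyz.
Qed.

Lemma v_notin_comp (T : finType) (e : rel T) v x0 : v \notin comp_of e v x0.
Proof. by rewrite inE eqxx. Qed.

Lemma cross (T : finType) (e : rel T) v x0 x y n :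
  x \in comp_of e v x0 -> y \notin comp_of e v x0 -> y \in nball e n x ->
  exists k, [/\ k <= n, v \in nball e k x & y \in nball e (n - k) v].
Proof.
move=> Hx; elim: n y => [|n IH] y Hy.
  by rewrite /= in_set1 => /eqP Eq; move: Hy; rewrite Eq Hx.
rewrite nballS => /orP [Hn| /existsP [z /andP [Hz Hez]]].
  have [k [Hk Hv Hy']] := IH _ Hy Hn.
  exists k; split => //; first exact: leqW.
  by apply: nball_le Hy'; apply: leq_sub2r.
case: (boolP (z \in comp_of e v x0)) => Hzc.
  case: (eqVneq y v) => Hyv.
    exists n.+1; rewrite subnn leqnn Hyv /= in_set1 eqxx; split => //.
    by rewrite -Hyv nballS; apply/orP; right; apply/existsP; exists z; rewrite Hz Hez.
  by move: Hy; rewrite (comp_step Hzc Hyv Hez).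
have [k [Hk Hv Hz']] := IH _ Hzc Hz.
exists k; split => //; first exact: leqW.
rewrite subSn //.
have := nball_trans Hz' (nball_edge Hez); by rewrite addn1.
Qed.

Lemma dist_split (T : finType) (e : rel T) (conn : connected_graph e) v x0 x y :
  x \in comp_of e v x0 -> y \notin comp_of e v x0 ->
  dist e x y = dist e x v + dist e v y.
Proof.
move=> Hx Hy; apply/eqP; rewrite eqn_leq dist_tri //=.
have [k [Hk Hv Hy']] := cross Hx Hy (dist_ball conn x y).
apply: leq_trans (leq_add (dist_min conn Hv) (dist_min conn Hy')) _.
by rewrite subnKC.
Qed.

Lemma del_sym (T : finType) (e : rel T) (e_sym : symmetric e) v :
  symmetric (del_rel e v).
Proof.
move=> a b; rewrite /del_rel /= e_sym.
by case: (a != v); case: (b != v).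
Qed.

Lemma comp_disj (T : finType) (e : rel T) (e_sym : symmetric e) v x1 x2 y :
  comp_of e v x1 != comp_of e v x2 -> y \in comp_of e v x1 -> y \notin comp_of e v x2.
Proof.
move=> Hne Hy1; apply/negP => Hy2; move/eqP: Hne; apply.
move: Hy1 Hy2; rewrite !inE => /andP [_ H1] /andP [_ H2].
have cs := sym_connect_sym (del_sym e_sym v).
apply/setP => z; rewrite !inE; congr (_ && _).
apply/idP/idP => H.
  by apply: connect_trans H2 _; apply: connect_trans _ H; rewrite cs.
by apply: connect_trans H1 _; apply: connect_trans _ H; rewrite cs.
Qed.

Lemma neighbor (T : finType) (e : rel T) (conn : connected_graph e) v x0 x :
  x \in comp_of e v x0 -> exists y, y \in comp_of e v x0 /\ e y v.
Proof.
move=> Hx; have /connectP [p Hp Hl] := conn x v.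
elim: p x Hx Hp Hl => [|h p IH] x Hx /=.
  by move=> _ Eq; move: Hx; rewrite -Eq inE eqxx.
move=> /andP [Hxh Hp] Hl.
case: (eqVneq h v) => Hhv; first by exists x; split => //; rewrite -Hhv.
exact: IH (comp_step Hx Hhv Hxh) Hp Hl.
Qed.

Lemma comp_in (T : finType) (e : rel T) v C :
  C \in components_del e v -> exists x, x != v /\ C = comp_of e v x.
Proof.
by case/imsetP => x; rewrite !inE => Hx ->; exists x.
Qed.

Lemma comp_self (T : finType) (e : rel T) v x : x != v -> x \in comp_of e v x.
Proof. by move=> H; rewrite inE H connect0. Qed.

Theorem proposition2p2 (T : finType) (e : rel T)
  (e_sym : symmetric e) (e_irr : irreflexive e)
  (e_conn : connected_graph e) (v : T) (hv : cut_vertex e v) :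
  (forall W : {set T}, resolving e W ->
     forall C1 C2, C1 \in components_del e v -> C2 \in components_del e v ->
       [disjoint W & C1] -> [disjoint W & C2] -> C1 = C2)
  /\
  (forall W : {set T}, resolving e W ->
     (exists C1 C2, [/\ C1 \in components_del e v, C2 \in components_del e v,
                        C1 != C2, W :&: C1 != set0 & W :&: C2 != set0]) ->
     resolving e (W :\ v)).
Proof.
split.
  move=> W HW C1 C2 /comp_in [x1 [Hx1 ->]] /comp_in [x2 [Hx2 ->]] D1 D2.
  apply/eqP; apply/negPn/negP => Hne.
  have [y1 [Hy1 E1]] := neighbor e_conn (comp_self e Hx1).
  have [y2 [Hy2 E2]] := neighbor e_conn (comp_self e Hx2).
  have Hy12 : y1 != y2.
    by apply/negP => /eqP Eq; move: (comp_disj e_sym Hne Hy1); rewrite Eq Hy2.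
  have [z Hz Hd] := HW _ _ Hy12.
  have Hz1 : z \notin comp_of e v x1 by rewrite (disjointFr D1 Hz).
  have Hz2 : z \notin comp_of e v x2 by rewrite (disjointFr D2 Hz).
  move: Hd; rewrite (dist_split e_conn Hy1 Hz1) (dist_split e_conn Hy2 Hz2).
  by rewrite (dist_edge e_irr e_conn E1) (dist_edge e_irr e_conn E2) eqxx.
move=> W HW [C1 [C2 [/comp_in [x1 [Hx1 EC1]] /comp_in [x2 [Hx2 EC2]] Hne HW1 HW2]]].
have [a Ha] := set0Pn _ HW1; have [b Hb] := set0Pn _ HW2.
move: Ha Hb; rewrite !inE => /andP [HaW Ha] /andP [HbW Hb].
move: Ha Hb Hne; rewrite EC1 EC2 => Ha Hb Hne.
have Hne' : comp_of e v x2 != comp_of e v x1 by rewrite eq_sym.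
have av : a != v by apply/negP => /eqP Eq; move: Ha; rewrite Eq inE eqxx.
have bv : b != v by apply/negP => /eqP Eq; move: Hb; rewrite Eq inE eqxx.
have aW : a \in W :\ v by rewrite !inE av.
have bW : b \in W :\ v by rewrite !inE bv.
have out : forall x0 c u w, c \in comp_of e v x0 -> u \notin comp_of e v x0 ->
   w \notin comp_of e v x0 -> dist e u v != dist e w v -> dist e u c != dist e w c.
  move=> x0 c u w Hc Hu Hw Hd.
  rewrite !(dist_sym e_sym e_conn _ c) (dist_split e_conn Hc Hu) (dist_split e_conn Hc Hw).
  by rewrite eqn_add2l !(dist_sym e_sym e_conn v).
move=> u w Huw.
have [z Hz Hd] := HW _ _ Huw.
case: (eqVneq z v) => Hzv; last by exists z => //; rewrite !inE Hzv.
move: Hd; rewrite Hzv => Hd.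
case: (boolP (u \in comp_of e v x1)) => Hu1; case: (boolP (w \in comp_of e v x1)) => Hw1.
- by exists b => //; apply: (out _ _ _ _ Hb (comp_disj e_sym Hne Hu1) (comp_disj e_sym Hne Hw1) Hd).
- have Hu2 := comp_disj e_sym Hne Hu1.
  case: (boolP (w \in comp_of e v x2)) => Hw2; last first.
    by exists b => //; apply: (out _ _ _ _ Hb Hu2 Hw2 Hd).
  case: (eqVneq (dist e u a) (dist e w a)) => Ea; last by exists a.
  case: (eqVneq (dist e u b) (dist e w b)) => Eb; last by exists b.
  move: Ea Eb; rewrite !(dist_sym e_sym e_conn _ a) !(dist_sym e_sym e_conn _ b).
  rewrite (dist_split e_conn Ha Hw1) (dist_split e_conn Hb Hu2) => Ea Eb.
  have t1 := dist_tri e_conn a v u. have t2 := dist_tri e_conn b v w.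
  move: Hd; rewrite (dist_sym e_sym e_conn u) (dist_sym e_sym e_conn w) => /eqP Hd.
  exfalso; apply: Hd; apply/eqP; rewrite eqn_leq; apply/andP; split.
    by rewrite -(leq_add2l (dist e b v)) Eb.
  by rewrite -(leq_add2l (dist e a v)) -Ea.
- have Hw2 := comp_disj e_sym Hne Hw1.
  case: (boolP (u \in comp_of e v x2)) => Hu2; last first.
    by exists b => //; apply: (out _ _ _ _ Hb Hu2 Hw2 Hd).
  case: (eqVneq (dist e u a) (dist e w a)) => Ea; last by exists a.
  case: (eqVneq (dist e u b) (dist e w b)) => Eb; last by exists b.
  move: Ea Eb; rewrite !(dist_sym e_sym e_conn _ a) !(dist_sym e_sym e_conn _ b).
  rewrite (dist_split e_conn Ha Hu1) (dist_split e_conn Hb Hw2) => Ea Eb.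
  have t1 := dist_tri e_conn a v w. have t2 := dist_tri e_conn b v u.
  move: Hd; rewrite (dist_sym e_sym e_conn u) (dist_sym e_sym e_conn w) => /eqP Hd.
  exfalso; apply: Hd; apply/eqP; rewrite eqn_leq; apply/andP; split.
    by rewrite -(leq_add2l (dist e a v)) Ea.
  by rewrite -(leq_add2l (dist e b v)) -Eb.
- by exists a => //; apply: (out _ _ _ _ Ha Hu1 Hw1 Hd).
Qed.
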